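(* Fix a real number $\sigma$. There exist constants $C>0$ and $V_0>0$, depending only on $\sigma$, such that for every integer $r\ge1$ and every real $v$ with $|v|\ge V_0$, writing $s=\sigma+iv$, $$\left|\binom{r+s-1}{r}\right|\le C\,\frac{(r+|v|)^{\sigma-1/2}\,e^{|\sigma+iv|}}{r^{1/2}\,|v|^{\sigma-1/2}}\exp\left(\frac{\pi}{2}|v|\right).$$
   Context: For complex $s$ and integer $r\ge0$, $\binom{r+s-1}{r}=\frac{s(s+1)\cdots(s+r-1)}{r!}=\frac{\Gamma(r+s)}{r!\,\Gamma(s)}$. *)

(* Defs.v *)
From Stdlib Require Import Reals Arith.
From Coquelicot Require Import Coquelicot.
Open Scope R_scope.

Fixpoint rising (s : C) (r : nat) : C :=
  match r with
  | O => 1%C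
  | S k => Cmult (rising s k) (Cplus s (RtoC (INR k)))
  end.

(* generalized binomial coefficient binom(r+s-1, r) = s(s+1)...(s+r-1)/r! *)
Definition gbinom (s : C) (r : nat) : C :=
  Cdiv (rising s r) (RtoC (INR (Factorial.fact r))).

(* Main.v *)
Require Import Defs.
From Stdlib Require Import Reals Lra Lia ZArith.
From Coquelicot Require Import Coquelicot.
Open Scope R_scope.


Lemma exp_mono x y : x <= y -> exp x <= exp y.
Proof. intros [H|H]; [left; apply exp_increasing; exact H| subst; lra]. Qed.

Lemma pow_exp x n : 0 < x -> x ^ n = exp (INR n * ln x).
Proof. intros Hx. rewrite <- ln_pow by exact Hx. rewrite exp_ln; auto. apply pow_lt; auto. Qed.

Lemma pow_le_exp y z n : 0 <= y -> y <= exp z -> y ^ n <= exp (INR n * z).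
Proof.
  intros H0 H1. apply Rle_trans with (exp z ^ n).
  - apply pow_incr; auto.
  - rewrite pow_exp by apply exp_pos. rewrite ln_exp. lra.
Qed.

Lemma ln_le_sub1 y : 0 < y -> ln y <= y - 1.
Proof. intros Hy. pose proof (exp_ineq1_le (ln y)). rewrite exp_ln in H; lra. Qed.

Lemma ln_diff a b : 0 < a -> a <= b -> (b - a) / b <= ln b - ln a <= (b - a) / a.
Proof.
  intros Ha Hab. split.
  - pose proof (ln_le_sub1 (a / b) ltac:(apply Rdiv_lt_0_compat; lra)). rewrite ln_div in H by lra.
    assert (a / b - 1 = - ((b - a) / b)) by (field; lra). lra.
  - pose proof (ln_le_sub1 (b / a) ltac:(apply Rdiv_lt_0_compat; lra)). rewrite ln_div in H by lra.
    assert (b / a - 1 = ((b - a) / a)) by (field; lra). lra.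
Qed.

Lemma sqrt_le_sq x y : 0 <= y -> x <= y * y -> sqrt x <= y.
Proof. intros Hy Hx. rewrite <- (sqrt_square y) by exact Hy. apply sqrt_le_1_alt; exact Hx. Qed.

Lemma abs_prod_lb a X B : Rabs X <= B -> - (Rabs a * B) <= a * X.
Proof.
  intros H. assert (Rabs (a * X) <= Rabs a * B).
  { rewrite Rabs_mult. apply Rmult_le_compat_l; [apply Rabs_pos|exact H]. }
  pose proof (Rabs_le_between (a*X) (Rabs a * B)) as [H1 _]. specialize (H1 H0). lra.
Qed.

Lemma abs_prod_ub a X B : Rabs X <= B -> a * X <= Rabs a * B.
Proof.
  intros H. assert (Rabs (a * X) <= Rabs a * B).
  { rewrite Rabs_mult. apply Rmult_le_compat_l; [apply Rabs_pos|exact H]. }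
  pose proof (Rabs_le_between (a*X) (Rabs a * B)) as [H1 _]. specialize (H1 H0). lra.
Qed.

Lemma fact_bound n : INR n ^ n <= exp (INR n) * INR (Factorial.fact n).
Proof.
  induction n as [|n IH].
  - simpl. rewrite exp_0. lra.
  - assert (Hn1 : INR (S n) ^ n <= exp 1 * INR n ^ n).
    { destruct n as [|m].
      - simpl. pose proof (exp_ineq1_le 1). lra.
      - set (n := S m) in *. assert (0 < INR n) by (apply lt_0_INR; unfold n; lia).
        rewrite S_INR. rewrite !pow_exp by lra.
        rewrite <- exp_plus. apply exp_mono.
        pose proof (ln_diff (INR n) (INR n + 1) H ltac:(lra)) as [_ H2].
        assert ((INR n + 1 - INR n) / INR n = / INR n) by (field; lra).
        rewrite H0 in H2. 
        assert (INR n * (ln (INR n + 1) - ln (INR n)) <= 1).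
        { apply Rle_trans with (INR n * / INR n). apply Rmult_le_compat_l; lra.
          rewrite Rinv_r; lra. }
        lra. }
    change (Factorial.fact (S n)) with (S n * Factorial.fact n)%nat; rewrite mult_INR. change (INR (S n) ^ S n) with (INR (S n) * INR (S n) ^ n).
    rewrite (S_INR n) at 3. rewrite exp_plus.
    pose proof (pos_INR (S n)). pose proof (exp_pos (INR n)). pose proof (exp_pos 1).
    pose proof (pos_INR n).
    apply Rle_trans with (INR (S n) * (exp 1 * INR n ^ n)).
    apply Rmult_le_compat_l; lra.
    apply Rle_trans with (INR (S n) * (exp 1 * (exp (INR n) * INR (Factorial.fact n)))).
    apply Rmult_le_compat_l; [lra|]. apply Rmult_le_compat_l; lra.
    lra.
Qed.


Lemma rising_mod sigma v k :
  Cmod (rising (sigma,v) (S k)) = Cmod (rising (sigma,v) k) * sqrt ((sigma + INR k)^2 + v^2).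
Proof.
  simpl rising. rewrite Cmod_mult. f_equal. unfold Cmod; simpl fst; simpl snd.
  replace (v + 0) with v by ring. reflexivity.
Qed.

Definition F sigma v r := Cmod (rising (sigma,v) r) / INR (Factorial.fact r).

Lemma gbinom_mod sigma v r : Cmod (gbinom (sigma,v) r) = F sigma v r.
Proof.
  unfold gbinom, F. rewrite Cmod_div.
  - rewrite Cmod_R, Rabs_pos_eq; auto. apply pos_INR.
  - intro H. injection H. intros H1. apply (INR_fact_neq_0 r). exact H1.
Qed.

Lemma F_nonneg sigma v r : 0 <= F sigma v r.
Proof.
  unfold F. apply Rmult_le_pos. apply Cmod_ge_0. left. apply Rinv_0_lt_compat.
  apply INR_fact_lt_0.
Qed.

Lemma P_bound sigma v r :
  Cmod (rising (sigma,v) r) <= (Rabs sigma + Rabs v + INR r) ^ r.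
Proof.
  induction r as [|r IH].
  - simpl. rewrite Cmod_1. lra.
  - rewrite rising_mod. rewrite S_INR. replace ((Rabs sigma + Rabs v + (INR r + 1)) ^ S r) with ((Rabs sigma + Rabs v + (INR r + 1)) * (Rabs sigma + Rabs v + (INR r + 1)) ^ r) by reflexivity.
    pose proof (Rabs_pos sigma). pose proof (Rabs_pos v). pose proof (pos_INR r).
    assert (Hs : sqrt ((sigma + INR r) ^ 2 + v ^ 2) <= Rabs sigma + Rabs v + INR r + 1).
    { apply sqrt_le_sq. lra.
      assert (sigma ^ 2 = Rabs sigma ^ 2) by (rewrite pow2_abs; reflexivity).
      assert (v ^ 2 = Rabs v ^ 2) by (rewrite pow2_abs; reflexivity).
      pose proof (Rle_abs (- sigma)) as Hab. rewrite Rabs_Ropp in Hab.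
      pose proof (Rle_abs sigma) as Hab2.
      assert (sigma * INR r <= Rabs sigma * INR r) by (apply Rmult_le_compat_r; lra).
      assert ((sigma + INR r)^2 <= (Rabs sigma + INR r)^2) by nra.
      nra. }
    assert (Hp : (Rabs sigma + Rabs v + INR r) ^ r <= (Rabs sigma + Rabs v + (INR r + 1)) ^ r).
    { apply pow_incr. lra. }
    rewrite Rmult_comm. apply Rmult_le_compat. apply sqrt_pos. apply Cmod_ge_0. lra. lra.
Qed.

Lemma crude sigma v r : (1 <= r)%nat ->
  F sigma v r <= exp (INR r) * (1 + (Rabs sigma + Rabs v) / INR r) ^ r.
Proof.
  intros Hr. assert (Hr0 : 0 < INR r) by (apply lt_0_INR; lia).
  set (M := Rabs sigma + Rabs v).
  assert (HM : (M + INR r) ^ r = INR r ^ r * (1 + M / INR r) ^ r).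
  { rewrite <- Rpow_mult_distr. f_equal. field. lra. }
  unfold F. pose proof (P_bound sigma v r) as HP. fold M in HP. rewrite HM in HP.
  pose proof (fact_bound r).
  pose proof (INR_fact_lt_0 r).
  apply Rle_trans with (INR r ^ r * (1 + M / INR r) ^ r / INR (Factorial.fact r)).
  { apply Rmult_le_compat_r. left; apply Rinv_0_lt_compat; auto. exact HP. }
  assert (Hpow : 0 <= (1 + M / INR r) ^ r).
  { apply pow_le. pose proof (Rabs_pos sigma). pose proof (Rabs_pos v).
    assert (0 <= M / INR r) by (apply Rdiv_le_0_compat; unfold M; lra). lra. }
  apply Rle_trans with (exp (INR r) * INR (Factorial.fact r) * (1 + M / INR r) ^ r / INR (Factorial.fact r)).
  - apply Rmult_le_compat_r. left; apply Rinv_0_lt_compat; auto.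
    apply Rmult_le_compat_r; auto.
  - right. field. lra.
Qed.

Lemma step sigma v r : (1 <= r)%nat ->
  F sigma v (S r) <= F sigma v r *
    exp ((sigma - 1) * (ln (INR r + 1) - ln (INR r)) +
         (Rabs (sigma - 1) + ((sigma - 1)^2 + v^2)/2) * (/ INR r - / (INR r + 1))).
Proof.
  intros Hr. assert (HR : 1 <= INR r) by (apply (le_INR 1); lia).
  set (R := INR r) in *.
  unfold F. rewrite rising_mod.
  change (Factorial.fact (S r)) with (S r * Factorial.fact r)%nat.
  rewrite mult_INR, S_INR. fold R.
  set (P := Cmod (rising (sigma, v) r)). set (fr := INR (Factorial.fact r)).
  assert (Hfr : 0 < fr) by apply INR_fact_lt_0.
  assert (HP : 0 <= P) by apply Cmod_ge_0.
  set (E := (sigma - 1) * (ln (R + 1) - ln R) +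
         (Rabs (sigma - 1) + ((sigma - 1)^2 + v^2)/2) * (/ R - / (R + 1))).
  assert (Hkey : sqrt ((sigma + R) ^ 2 + v ^ 2) / (R + 1) <= exp E).
  { assert (Hq : sqrt ((sigma + R) ^ 2 + v ^ 2) / (R + 1) = sqrt (((sigma + R) ^ 2 + v ^ 2) / (R + 1)^2)).
    { rewrite sqrt_div_alt by nra. rewrite sqrt_pow2 by lra. reflexivity. }
    rewrite Hq. apply sqrt_le_sq. left; apply exp_pos.
    rewrite <- exp_plus.
    set (Z := ((sigma + R) ^ 2 + v ^ 2) / (R + 1) ^ 2).
    pose proof (exp_ineq1_le (Z - 1)).
    enough (Z - 1 <= E + E) by (pose proof (exp_mono _ _ H0); lra).
    set (d := sigma - 1).
    assert (HZ : Z - 1 = 2 * d / (R + 1) + (d^2 + v^2) / (R + 1)^2) by (unfold Z, d; field; lra).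
    rewrite HZ.
    assert (HA := ln_diff R (R + 1) ltac:(lra) ltac:(lra)).
    replace (R + 1 - R) with 1 in HA by ring.
    set (A := ln (R + 1) - ln R) in *.
    assert (Hd2 : (d^2 + v^2) / (R + 1)^2 <= (d^2 + v^2) * (/ R - / (R + 1))).
    { replace (/ R - / (R + 1)) with (/ (R * (R + 1))) by (field; lra).
      unfold Rdiv. apply Rmult_le_compat_l. nra.
      apply Rinv_le_contravar. nra. nra. }
    assert (Hd1 : 2 * d / (R + 1) <= 2 * d * A + 2 * Rabs d * (/ R - / (R + 1))).
    { destruct (Rle_dec 0 d).
      - rewrite Rabs_pos_eq by lra.
        assert (d / (R + 1) <= d * A).
        { unfold Rdiv. apply Rmult_le_compat_l; lra. }
        assert (0 <= d * (/ R - / (R + 1))).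
        { apply Rmult_le_pos; auto. replace (/ R - / (R + 1)) with (/ (R * (R + 1))) by (field; lra).
          left; apply Rinv_0_lt_compat; nra. }
        unfold Rdiv in *. lra.
      - rewrite Rabs_left by lra.
        assert (d * / R <= d * A).
        { apply Rmult_le_compat_neg_l; lra. }
        assert (2 * d / (R + 1) = 2 * d * / R + 2 * - d * (/ R - / (R + 1))) by (field; lra).
        lra. }
    unfold E. fold d. lra. }
  assert (exp E * (P / fr) = P * exp E / fr) by (field; lra).
  apply Rle_trans with ((sqrt ((sigma + R) ^ 2 + v ^ 2) / (R + 1)) * (P / fr)).
  - right. field. split; lra.
  - rewrite (Rmult_comm (P / fr)). apply Rmult_le_compat_r. apply Rdiv_le_0_compat; lra. exact Hkey.
Qed.


Lemma F_iter sigma v N j : (1 <= N)%nat ->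
  F sigma v (N + j) <= F sigma v N *
    exp ((sigma - 1) * (ln (INR (N + j)) - ln (INR N)) +
         (Rabs (sigma - 1) + ((sigma - 1)^2 + v^2)/2) * (/ INR N - / INR (N + j))).
Proof.
  intros HN. induction j as [|j IH].
  - rewrite Nat.add_0_r. replace ((sigma - 1) * (ln (INR N) - ln (INR N)) +
      (Rabs (sigma - 1) + ((sigma - 1) ^ 2 + v ^ 2) / 2) * (/ INR N - / INR N)) with 0 by ring.
    rewrite exp_0. lra.
  - rewrite Nat.add_succ_r. eapply Rle_trans. apply step. lia.
    rewrite S_INR.
    set (Q := Rabs (sigma - 1) + ((sigma - 1) ^ 2 + v ^ 2) / 2).
    fold Q in IH.
    eapply Rle_trans. apply Rmult_le_compat_r. left; apply exp_pos. exact IH.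
    rewrite Rmult_assoc, <- exp_plus. right. f_equal. f_equal. ring.
Qed.


Theorem lemma2p2 (sigma : R) :
  exists C0 V0 : R, 0 < C0 /\ 0 < V0 /\
    forall (r : nat) (v : R), (1 <= r)%nat -> V0 <= Rabs v ->
      Cmod (gbinom (sigma, v) r) <=
        C0 * (Rpower (INR r + Rabs v) (sigma - 1/2) * exp (Cmod (sigma, v)))
           / (Rpower (INR r) (1/2) * Rpower (Rabs v) (sigma - 1/2))
           * exp (PI / 2 * Rabs v).
Proof.
  set (c0 := 3 + 2 * Rabs sigma + 2 * Rabs (sigma - 1/2) + Rabs (sigma - 1) + (sigma - 1)^2).
  exists (exp c0), 48. split; [apply exp_pos|]. split; [lra|].
  intros r v Hr Hv.
  set (w := Rabs v) in *.
  assert (Hw0 : 0 < w) by lra.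
  set (s := Cmod (sigma, v)).
  assert (Hs : w <= s).
  { unfold s, Cmod; simpl fst; simpl snd. rewrite <- (sqrt_square w) by lra.
    apply sqrt_le_1_alt. assert (w * w = v ^ 2) by (unfold w; rewrite <- pow2_abs; ring).
    pose proof (pow2_ge_0 sigma). lra. }
  assert (Hlnw : ln (w + 1) <= w / 4).
  { assert (w + 1 <= exp (w / 4)).
    { replace (w / 4) with (w / 8 + w / 8) by field. rewrite exp_plus.
      pose proof (exp_ineq1_le (w / 8)). nra. }
    rewrite <- (ln_exp (w / 4)). apply ln_le; lra. }
  assert (Hln2 : ln 2 <= 0.8).
  { assert (2 <= exp 0.8).
    { replace 0.8 with ((0.2 + 0.2) + (0.2 + 0.2)) by lra. rewrite !exp_plus.
      pose proof (exp_ineq1_le 0.2).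
      assert (1.44 <= exp 0.2 * exp 0.2) by nra. nra. }
    rewrite <- (ln_exp 0.8). apply ln_le; lra. }
  assert (Hpi : 3/2 * w <= PI / 2 * w).
  { apply Rmult_le_compat_r; [lra|]. left; apply PI2_3_2. }
  destruct (archimed w) as [Hz1 Hz2].
  set (z := up w) in *.
  assert (Hz0 : (0 < z)%Z) by (apply lt_0_IZR; lra).
  set (N := Z.to_nat z).
  assert (HNz : INR N = IZR z).
  { unfold N. rewrite INR_IZR_INZ, Z2Nat.id; auto; lia. }
  assert (HN1 : (1 <= N)%nat).
  { apply INR_le. rewrite HNz. simpl. lra. }
  assert (HNw : w <= INR N <= w + 1) by lra.
  assert (HR1 : 1 <= INR r) by (apply (le_INR 1); exact Hr).
  set (T := c0 + (sigma - 1/2) * ln (INR r + w) + s + - (1/2 * ln (INR r))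
            + - ((sigma - 1/2) * ln w) + PI / 2 * w).
  assert (HT : exp (c0) * (Rpower (INR r + w) (sigma - 1/2) * exp s)
           / (Rpower (INR r) (1/2) * Rpower w (sigma - 1/2)) * exp (PI / 2 * w) = exp T).
  { unfold T, Rpower. rewrite !exp_plus, !exp_Ropp. field.
    split; apply Rgt_not_eq, exp_pos. }
  rewrite HT, gbinom_mod.
  set (M := Rabs sigma + Rabs v).
  assert (HM : M = Rabs sigma + w) by reflexivity.
  pose proof (Rabs_pos sigma). pose proof (Rabs_pos (sigma - 1/2)).
  pose proof (Rabs_pos (sigma - 1)). pose proof (pow2_ge_0 (sigma - 1)).
  assert (Hlnr0 : 0 <= ln (INR r)) by (rewrite <- ln_1; apply ln_le; lra).
  destruct (le_lt_dec r N) as [HrN|HrN].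
  -
    assert (HrN' : INR r <= INR N) by (apply le_INR; exact HrN).
    eapply Rle_trans. apply crude. exact Hr. fold M.
    assert (Hcr : (1 + M / INR r) ^ r <= exp (INR r * (M / INR r))).
    { apply pow_le_exp. assert (0 <= M / INR r) by (apply Rdiv_le_0_compat; lra). lra.
      apply exp_ineq1_le. }
    replace (INR r * (M / INR r)) with M in Hcr by (field; lra).
    eapply Rle_trans. apply Rmult_le_compat_l. left; apply exp_pos. exact Hcr.
    rewrite <- exp_plus. apply exp_mono.
    assert (Hl1 : ln (INR r) <= ln (w + 1)) by (apply ln_le; lra).
    assert (Hl2 : ln w <= ln (INR r + w)) by (apply ln_le; lra).
    assert (Hl3 : ln (INR r + w) <= 2 + ln w).
    { assert (ln 3 <= 2).
      { rewrite <- (ln_exp 2). apply ln_le. lra. replace 2 with (1 + 1) by lra.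
        rewrite exp_plus. pose proof (exp_ineq1_le 1). nra. }
      assert (H3w : ln (INR r + w) <= ln (3 * w)) by (apply ln_le; lra).
      rewrite ln_mult in H3w by lra. lra. }
    assert (Hab : Rabs (ln (INR r + w) - ln w) <= 2).
    { rewrite Rabs_pos_eq; lra. }
    pose proof (abs_prod_lb (sigma - 1/2) _ _ Hab).
    unfold T, c0. lra.
  -
    destruct (Nat.le_exists_sub N r) as [j [Hj _]]. lia.
    rewrite Nat.add_comm in Hj. subst r.
    assert (HrN' : INR N <= INR (N + j)) by (apply le_INR; lia).
    set (r := (N + j)%nat) in *.
    eapply Rle_trans. apply (F_iter sigma v N j HN1).
    assert (HFN : F sigma v N <= exp (INR N + (0.8 * INR N + Rabs sigma / 2))).
    { eapply Rle_trans. apply crude. exact HN1. fold M.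
      rewrite exp_plus. apply Rmult_le_compat_l. left; apply exp_pos.
      replace (0.8 * INR N + Rabs sigma / 2) with (INR N * (0.8 + Rabs sigma / (2 * INR N)))
        by (field; lra).
      apply pow_le_exp. assert (0 <= M / INR N) by (apply Rdiv_le_0_compat; lra). lra.
      rewrite exp_plus.
      assert (2 <= exp 0.8).
      { rewrite <- (exp_ln 2) by lra. apply exp_mono. exact Hln2. }
      pose proof (exp_ineq1_le (Rabs sigma / (2 * INR N))).
      assert (0 <= Rabs sigma / (2 * INR N)) by (apply Rdiv_le_0_compat; lra).
      assert (1 + M / INR N <= 2 * (1 + Rabs sigma / (2 * INR N))).
      { assert (M / INR N <= 1 + Rabs sigma / INR N).
        { apply Rmult_le_reg_r with (INR N). lra.
          replace (M / INR N * INR N) with M by (field; lra).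
          replace ((1 + Rabs sigma / INR N) * INR N) with (INR N + Rabs sigma) by (field; lra).
          lra. }
        replace (Rabs sigma / (2 * INR N)) with (Rabs sigma / INR N / 2) by (field; lra).
        lra. }
      nra. }
    eapply Rle_trans. apply Rmult_le_compat_r. left; apply exp_pos. exact HFN.
    rewrite <- exp_plus. apply exp_mono. fold r.
    set (Q := Rabs (sigma - 1) + ((sigma - 1) ^ 2 + v ^ 2) / 2).
    assert (HQ : Q * (/ INR N - / INR r) <= Rabs (sigma - 1) + (sigma - 1)^2 / 2 + w / 2).
    { assert (HQ0 : 0 <= Q) by (unfold Q; pose proof (pow2_ge_0 v); lra).
      assert (0 < / INR r) by (apply Rinv_0_lt_compat; lra).
      assert (Q * (/ INR N - / INR r) <= Q * / INR N).
      { apply Rmult_le_compat_l; lra. }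
      set (iN := / INR N) in *.
      assert (HiN : INR N * iN = 1) by (unfold iN; field; lra).
      assert (0 < iN) by (unfold iN; apply Rinv_0_lt_compat; lra).
      assert (iN <= 1) by nra.
      assert (w * iN <= 1) by nra.
      assert (v ^ 2 = w * w) by (unfold w; rewrite <- pow2_abs; ring).
      assert ((Rabs (sigma - 1) + (sigma - 1) ^ 2 / 2) * iN <= Rabs (sigma - 1) + (sigma - 1) ^ 2 / 2)
        by nra.
      assert (w * (w * iN) <= w * 1) by (apply Rmult_le_compat_l; lra).
      unfold Q in *. nra. }
    assert (Hy1a : ln (INR r) <= ln (INR r + w)) by (apply ln_le; lra).
    assert (Hy1b : ln (INR r + w) <= ln 2 + ln (INR r)).
    { rewrite <- ln_mult by lra. apply ln_le; lra. }
    assert (Hy2a : ln w <= ln (INR N)) by (apply ln_le; lra).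
    assert (Hy2b : ln (INR N) <= ln 2 + ln w).
    { rewrite <- ln_mult by lra. apply ln_le; lra. }
    assert (HlnN : ln (INR N) <= ln (w + 1)) by (apply ln_le; lra).
    assert (Hab : Rabs ((ln (INR r) - ln (INR r + w)) + (ln w - ln (INR N))) <= 1.6).
    { rewrite Rabs_left1 by lra. lra. }
    pose proof (abs_prod_ub (sigma - 1/2) _ _ Hab).
    unfold T, c0. lra.
Qed.
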